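(* Let $\mathscr N$ be a chemical reaction network. Let $p\ge2$ be the length of its finest independent decomposition and $q\ge2$ the length of its finest incidence independent decomposition. Then the number of independent decompositions of $\mathscr N$ is the Bell number $B_p$, and the number of incidence independent decompositions of $\mathscr N$ is $B_q$. Here the Bell numbers are defined by $B_0=1$ and $$B_p=\sum_{k=1}^{p}\binom{p-1}{k-1}B_{p-k},$$ i.e., $B_p$ is the number of partitions of a $p$-element set.
   Context: A chemical reaction network (CRN) $\mathscr N=(\mathscr S,\mathscr C,\mathscr R)$ consists of: - a finite set $\mathscr S$ of species; - a finite set $\mathscr C\subseteq\mathbb R^{\mathscr S}_{\ge0}$ of complexes; - a set $\mathscr R\subseteq\mathscr C\times\mathscr C$ of reactions, with no reaction $y\to y$ and every complex occurring in some reaction. A decomposition of $\mathscr N$ is the set of subnetworks $\mathscr N_1,\ldots,\mathscr N_k$ induced by a partition $\{\mathscr R_1,\ldots,\mathscr R_k\}$ of $\mathscr R$. Its length is $k$. The trivial decomposition ($k=1$) is counted. Let $S$ be the stoichiometric subspace $\operatorname{span}\{y'-y: y\to y'\in\mathscr R\}$, and $S_i$ the analogous subspace of $\mathscr N_i$. The decomposition is independent if $S=S_1\oplus\cdots\oplus S_k$. The decomposition is incidence independent if $n-l=\sum_i(n_i-l_i)$, where $n$ and $l$ are the numbers of complexes and of linkage classes (connected components of the underlying undirected graph) of $\mathscr N$, and $n_i$ and $l_i$ are those of $\mathscr N_i$. The finest independent (resp. incidence independent) decomposition is the unique independent (resp. incidence independent) decomposition that has no independent (resp. incidence independent) proper refinement.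 A refinement of a decomposition induced by $\{\mathscr R_i\}$ is one induced by a partition each of whose blocks lies in some $\mathscr R_i$. *)

(* Defs.v *)
From HB Require Import structures.
From mathcomp Require Import all_boot all_order all_algebra.
Set Implicit Arguments. Unset Strict Implicit. Unset Printing Implicit Defensive.
Import Order.TTheory GRing.Theory Num.Theory.
Local Open Scope ring_scope.

(* A chemical reaction network with species 'I_ns, complexes indexed by 'I_nc
   (comp k : 'rV[R]_ns is the k-th complex, a vector in R^S_{>=0}),
   reactions indexed by 'I_nr (rxn i = (source, product) complex indices). *)

Definition is_crn (R : realFieldType) (ns nc nr : nat)
  (comp : 'I_nc -> 'rV[R]_ns) (rxn : 'I_nr -> 'I_nc * 'I_nc) : Prop :=
  [/\ (forall k j, 0 <= comp k 0 j),
      injective comp,                           (* C is a set of complexes *)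
      injective rxn,                            (* R is a set of reactions *)
      (forall i, (rxn i).1 != (rxn i).2)
    & (forall k, exists i, k = (rxn i).1 \/ k = (rxn i).2) ].

Section CRN.
Variables (R : realFieldType) (ns nc nr : nat).
Variables (comp : 'I_nc -> 'rV[R]_ns) (rxn : 'I_nr -> 'I_nc * 'I_nc).

(* Rows of this matrix span the stoichiometric subspace of the subnetwork
   with reaction set A: span { y' - y : (y -> y') in A }. *)
Definition stoich_mx (A : {set 'I_nr}) : 'M[R]_(nr, ns) :=
  \matrix_(i < nr) (if i \in A then comp (rxn i).2 - comp (rxn i).1 else 0).

(* The stoichiometric subspace itself (canonical square representative). *)
Definition stoich_space (A : {set 'I_nr}) : 'M[R]_ns := <<stoich_mx A>>%MS.

Definition decomposition (P : {set {set 'I_nr}}) : bool :=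
  partition P [set: 'I_nr].

Definition independent (P : {set {set 'I_nr}}) : bool :=
  (stoich_space [set: 'I_nr] == \sum_(B in P) stoich_space B)%MS
  && mxdirect (\sum_(B in P) stoich_space B).

Definition complexes_of (A : {set 'I_nr}) : {set 'I_nc} :=
  [set k | [exists i in A, (k == (rxn i).1) || (k == (rxn i).2)]].

Definition link_rel (A : {set 'I_nr}) : rel 'I_nc :=
  fun k k' => [exists i in A, (rxn i == (k, k')) || (rxn i == (k', k))].

Definition n_cx (A : {set 'I_nr}) : nat := #|complexes_of A|.
Definition n_lc (A : {set 'I_nr}) : nat :=
  n_comp (connect (link_rel A)) (complexes_of A).

Definition incidence_independent (P : {set {set 'I_nr}}) : bool :=
  (n_cx [set: 'I_nr] - n_lc [set: 'I_nr] ==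
   \sum_(B in P) (n_cx B - n_lc B))%N.

Definition refines (Q P : {set {set 'I_nr}}) : bool :=
  [forall B in Q, [exists C in P, B \subset C]].

Definition finest (prop : {set {set 'I_nr}} -> bool) (P : {set {set 'I_nr}}) : Prop :=
  [/\ decomposition P, prop P &
      forall Q, decomposition Q -> prop Q -> refines Q P -> Q = P].

Definition num_decomps (prop : {set {set 'I_nr}} -> bool) : nat :=
  #|[set P : {set {set 'I_nr}} | decomposition P & prop P]|.

End CRN.

Fixpoint bells (n : nat) : seq nat :=
  match n with
  | 0 => [:: 1%N]
  | p.+1 => let s := bells p in
            rcons s (\sum_(j < p.+1) 'C(p, j) * nth 0%N s (p - j))%N
  end.
Definition bell (n : nat) : nat := nth 0%N (bells n) n.

(* Main.v *)
Require Import Defs.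
From HB Require Import structures.
From mathcomp Require Import all_boot all_order all_algebra.
From mathcomp Require Import zify.
Set Implicit Arguments. Unset Strict Implicit. Unset Printing Implicit Defensive.
Import Order.TTheory GRing.Theory Num.Theory.
Local Open Scope ring_scope.

Section Gen.
Variables (F : fieldType) (nr m : nat) (v : 'I_nr -> 'rV[F]_m).

Definition Mx (A : {set 'I_nr}) : 'M[F]_(nr, m) :=
  \matrix_(i < nr) (if i \in A then v i else 0).
Definition rk A := \rank (Mx A).

Lemma row_Mx (A : {set 'I_nr}) i : row i (Mx A) = if i \in A then v i else 0.
Proof. by rewrite rowK. Qed.

Lemma Mx_sub (A B : {set 'I_nr}) : A \subset B -> (Mx A <= Mx B)%MS.
Proof.
move=> /subsetP sAB; apply/row_subP => i; rewrite row_Mx.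
case: ifP => iA; last by rewrite sub0mx.
have <- : row i (Mx B) = v i by rewrite row_Mx (sAB _ iA).
exact: row_sub.
Qed.

Lemma Mx_cover (X : {set 'I_nr}) (P : {set {set 'I_nr}}) :
  X \subset cover P -> (Mx X <= \sum_(B in P) <<Mx B>>)%MS.
Proof.
move=> /subsetP sX; apply/row_subP => i; rewrite row_Mx.
case: ifP => iX; last by rewrite sub0mx.
have /bigcupP[B BP iB] := sX _ iX.
apply: (sumsmx_sup B) => //; rewrite genmxE.
have <- : row i (Mx B) = v i by rewrite row_Mx iB.
exact: row_sub.
Qed.

Lemma rank_sum_le (P : {set {set 'I_nr}}) :
  (\rank (\sum_(B in P) <<Mx B>>)%MS <= \sum_(B in P) rk B)%N.
Proof.
rewrite /rk; under [X in (_ <= X)%N]eq_bigr do rewrite -mxrank_gen.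
exact: (mxrank_sum_leqif _).1.
Qed.

Lemma rk_cover (X : {set 'I_nr}) (P : {set {set 'I_nr}}) :
  X \subset cover P -> (rk X <= \sum_(B in P) rk B)%N.
Proof.
move=> sX; apply: leq_trans (rank_sum_le P); exact: mxrankS (Mx_cover sX).
Qed.

Lemma Mx0 : Mx set0 = 0.
Proof. by apply/row_matrixP => i; rewrite row_Mx inE row0. Qed.
Lemma rk0 : rk set0 = 0%N.
Proof. by rewrite /rk Mx0 mxrank0. Qed.


Definition good (P : {set {set 'I_nr}}) := (\sum_(B in P) rk B == rk setT)%N.

Lemma good_direct (P : {set {set 'I_nr}}) : decomposition P -> good P ->
  mxdirect (\sum_(B in P) <<Mx B>>).
Proof.
move=> dP /eqP gP; rewrite mxdirectEgeq /=.
under eq_bigr do rewrite mxrank_gen.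
rewrite -/(rk _) gP; apply: mxrankS; apply: Mx_cover.
by rewrite (cover_partition dP).
Qed.

Lemma rk_restrict (P : {set {set 'I_nr}}) X : decomposition P -> good P ->
  rk X = (\sum_(C in P) rk (X :&: C))%N.
Proof.
move=> dP gP; have dx := good_direct dP gP.
have dX : mxdirect (\sum_(C in P) <<Mx (X :&: C)>>).
  apply/mxdirect_sumsP => C CP; move/mxdirect_sumsP: dx => /(_ C CP) H.
  apply/eqP; rewrite -submx0.
  apply: (submx_trans _ (_ : (<<Mx C>> :&: \sum_(j in P | j != C) <<Mx j>> <= 0)%MS)); last by rewrite H.
  apply: capmxS.
    by rewrite !genmxE Mx_sub ?subsetIr.
  by apply: sumsmxS => D _; rewrite !genmxE Mx_sub ?subsetIr.
have e : (Mx X == \sum_(C in P) <<Mx (X :&: C)>>)%MS.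
  apply/andP; split.
    apply/row_subP => i; rewrite row_Mx; case: ifP => iX; last by rewrite sub0mx.
    have : i \in cover P by rewrite (cover_partition dP) inE.
    move=> /bigcupP[C CP iC]; apply: (sumsmx_sup C) => //; rewrite genmxE.
    have <- : row i (Mx (X :&: C)) = v i by rewrite row_Mx inE iX iC.
    exact: row_sub.
  by apply/sumsmx_subP => C _; rewrite genmxE Mx_sub ?subsetIl.
rewrite /rk (eqmx_rank e); move/mxdirectP: dX => /= ->.
by apply: eq_bigr => C _; rewrite mxrank_gen.
Qed.


Lemma good_coarsen (Pf Q : {set {set 'I_nr}}) : decomposition Pf -> good Pf ->
  decomposition Q -> refines Pf Q -> good Q.
Proof.
move=> dP gP dQ /forall_inP rPQ; rewrite /good -(eqP gP).
rewrite (eq_bigr (fun C => \sum_(B in Pf) rk (C :&: B))%N); last first.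
  by move=> C _; apply: rk_restrict.
rewrite exchange_big /=; apply/eqP/eq_bigr => B BP.
have /exists_inP[C0 C0Q sBC0] := rPQ B BP.
rewrite (bigD1 C0) //= (setIidPr sBC0) big1 ?addn0 //.
move=> C /andP[CQ nC]; have := partition_trivIset dQ => /trivIsetP /(_ C C0 CQ C0Q nC).
move=> /disjoint_setI0 e; suff -> : C :&: B = set0 by rewrite rk0.
by apply/eqP; rewrite -subset0 -e setIS.
Qed.

Lemma good_finest (Pf Q : {set {set 'I_nr}}) : finest good Pf ->
  decomposition Q -> good Q -> refines Pf Q.
Proof.
case=> dP gP minP dQ gQ.
pose h (x : {set 'I_nr} * {set 'I_nr}) := x.1 :&: x.2.
pose D := [set x | [&& x.1 \in Pf, x.2 \in Q & h x != set0]].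
pose M := h @: D.
have tP := partition_trivIset dP; have tQ := partition_trivIset dQ.
have cP := cover_partition dP; have cQ := cover_partition dQ.
have key x k : x \in D -> k \in h x -> x = (pblock Pf k, pblock Q k).
  rewrite inE => /and3P[xP xQ _]; rewrite inE => /andP[k1 k2].
  by case: x xP xQ k1 k2 => a b /= aP bQ ka kb; rewrite (def_pblock tP aP ka) (def_pblock tQ bQ kb).
have injh : {in D &, injective h}.
  move=> x y xD yD e; have := xD; rewrite inE => /and3P[_ _ /set0Pn[k kx]].
  by rewrite (key _ _ xD kx) (key y k yD) // -e.
have dM : decomposition M.
  apply/and3P; split.
  - rewrite eqEsubset subsetT /=; apply/subsetP => k _; apply/bigcupP.
    have kT : k \in cover Pf by rewrite cP inE.
    have kT' : k \in cover Q by rewrite cQ inE.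
    have kh : k \in h (pblock Pf k, pblock Q k) by rewrite inE /= !mem_pblock kT kT'.
    exists (h (pblock Pf k, pblock Q k)) => //; apply: imset_f.
    rewrite inE /= !pblock_mem //=; by apply/set0Pn; exists k.
  - apply/trivIsetP => A B /imsetP[x xD ->] /imsetP[y yD ->] ne.
    rewrite -setI_eq0; apply: contraR ne => /set0Pn[k]; rewrite inE => /andP[kx ky].
    by rewrite (key _ _ xD kx) (key _ _ yD ky).
  - apply/negP; case/imsetP => x; rewrite inE => /and3P[_ _ ne] e.
    by rewrite -e eqxx in ne.
have gM : good M.
  rewrite /good big_imset //= -(eqP gP).
  rewrite (eq_bigr (fun B => \sum_(C in Q) rk (B :&: C))%N); last first.
    by move=> B _; apply: rk_restrict.
  rewrite pair_big /=; apply/eqP; rewrite [RHS](bigID (fun x => h x == set0)) /=.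
  rewrite [X in (X + _)%N]big1 ?add0n; last by move=> x /andP[_ /eqP e]; rewrite (_ : x.1 :&: x.2 = set0) ?rk0.
  apply: eq_bigl => x; rewrite inE andbA.
  by case: (_ && _).
have rM : refines M Pf.
  apply/forall_inP => A /imsetP[x]; rewrite inE => /and3P[xP _ _] ->.
  by apply/exists_inP; exists x.1 => //; rewrite subsetIl.
have eM := minP M dM gM rM.
apply/forall_inP => B; rewrite -eM => /imsetP[x]; rewrite inE => /and3P[_ xQ _] ->.
by apply/exists_inP; exists x.2 => //; rewrite subsetIr.
Qed.

Lemma good_iff (Pf Q : {set {set 'I_nr}}) : finest good Pf ->
  decomposition Q -> good Q = refines Pf Q.
Proof.
move=> fP dQ; apply/idP/idP; first exact: good_finest.
by case: fP => dP gP _; apply: good_coarsen.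
Qed.

End Gen.
Local Close Scope ring_scope.

Lemma size_bells n : size (bells n) = n.+1.
Proof. by elim: n => //= n IH; rewrite size_rcons IH. Qed.

Lemma nth_bells n i : i <= n -> nth 0 (bells n) i = bell i.
Proof.
elim: n i => [|n IH] i; first by rewrite leqn0 => /eqP ->.
rewrite leq_eqVlt => /orP[/eqP -> //|lt].
by rewrite /= nth_rcons size_bells lt IH.
Qed.

Lemma bellS n : bell n.+1 = \sum_(j < n.+1) 'C(n, j) * bell (n - j).
Proof.
rewrite /bell /= nth_rcons size_bells ltnn eqxx.
by apply: eq_bigr => j _; rewrite nth_bells // leq_subr.
Qed.

Lemma bell0 : bell 0 = 1. Proof. by []. Qed.

Section Count.
Variable T : finType.
Definition parts (D : {set T}) := [set P : {set {set T}} | partition P D].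

Lemma parts_set0 : #|parts set0| = 1.
Proof.
rewrite (_ : parts set0 = [set set0]) ?cards1 //.
by apply/setP => P; rewrite !inE partition_set0.
Qed.

Lemma parts_block (D Y : {set T}) x : x \in D -> Y \subset D :\ x ->
  #|[set P | partition P D & pblock P x == x |: Y]| = #|parts ((D :\ x) :\: Y)|.
Proof.
move=> xD sY; set B := x |: Y; set D'' := (D :\ x) :\: Y.
have xB : x \in B by rewrite setU11.
have xY : x \notin Y by apply/negP => /(subsetP sY); rewrite !inE eqxx.
have BD : B :|: D'' = D.
  apply/setP => k; rewrite !inE; have := subsetP sY k; rewrite !inE.
  case: eqP => [->|_] /=; [by rewrite xD; case: (x \in Y) | idtac].
  by case: (k \in Y) => //= /(_ isT) ->.
have Bn0 : B != set0 by apply/set0Pn; exists x.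
have disj : [disjoint B & D''].
  rewrite -setI_eq0; apply/eqP/setP => k; rewrite !inE.
  by case: (k == x); case: (k \in Y).
have DB : D :\: B = D''.
  by apply/setP => k; rewrite !inE; case: (k == x); case: (k \in Y).
have nB P : partition P D'' -> B \notin P.
  move=> pP; apply/negP => BP; have := partitionS pP BP.
  by move=> /subsetP /(_ x xB); rewrite !inE eqxx andbF.
rewrite -(card_in_imset (f := fun P' => B |: P') (D := parts D'')); last first.
  move=> P1 P2; rewrite !inE => p1 p2 e.
  by rewrite -(setU1K (nB _ p1)) e setU1K // nB.
apply: eq_card => P; rewrite !inE; apply/andP/imsetP.
  case=> pP /eqP pb.
  have BP : B \in P by rewrite -pb pblock_mem ?(cover_partition pP).
  exists (P :\ B); last by rewrite setD1K.
  by rewrite inE -DB; apply: partitionD1.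
case=> P'; rewrite inE => pP' ->.
have pU : partition (B |: P') D by rewrite -BD; apply: partitionU1.
split => //; apply/eqP; apply: def_pblock => //.
  exact: partition_trivIset pU.
by rewrite setU11.
Qed.

Lemma card_parts (D : {set T}) : #|parts D| = bell #|D|.
Proof.
have [n] := ubnP #|D|; elim: n D => // n IH D; rewrite ltnS => leD.
case: (set_0Vmem D) => [->|[x xD]]; first by rewrite parts_set0 cards0.
set D' := D :\ x.
have cD : #|D| = #|D'|.+1 by rewrite (cardsD1 x D) xD.
rewrite cD bellS.
transitivity (\sum_(Y in powerset D') #|[set P | partition P D & pblock P x == x |: Y]|).
  rewrite -sum1_card (partition_big (fun P => pblock P x :\ x) (mem (powerset D'))) /=.
    apply: eq_bigr => Y; rewrite ?inE ?powersetE => sY; rewrite -sum1_card.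
    apply: eq_bigl => P; rewrite !inE.
    case pP: (partition P D) => //=.
    have xb : x \in pblock P x by rewrite mem_pblock (cover_partition pP).
    have xY : x \notin Y by apply/negP => /(subsetP sY); rewrite !inE eqxx.
    by apply/eqP/eqP => [<-|->]; [rewrite setD1K|rewrite setU1K].
  move=> P; rewrite !inE => pP; apply: setSD.
  by apply: (partitionS pP); rewrite pblock_mem ?(cover_partition pP).
rewrite (eq_bigr (fun Y : {set T} => bell (#|D'| - #|Y|))); last first.
  move=> Y; rewrite powersetE => sY; rewrite parts_block // IH.
    by rewrite cardsD (setIidPr sY).
  apply: leq_ltn_trans (subset_leq_card (subsetDl D' Y)) _.
  by rewrite -ltnS -cD.
rewrite (eq_bigr (fun j : 'I_#|D'|.+1 => \sum_(Y | (Y \in powerset D') && (#|Y| == j)) bell (#|D'| - j))); last first.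
  move=> j _; rewrite -cards_draws -sum_nat_const; apply: eq_bigl => Y.
  by rewrite !inE.
rewrite (exchange_big_dep (mem (powerset D'))) /=; last by move=> j Y _ /andP[].
apply: eq_bigr => Y; rewrite powersetE => sY.
have lY : #|Y| < #|D'|.+1 by rewrite ltnS subset_leq_card.
rewrite (big_pred1 (Ordinal lY)) //= => j.
rewrite sY /=; apply/eqP/eqP => [e|->] //; exact: val_inj.
Qed.
End Count.

Lemma card_coarse nr (Pf : {set {set 'I_nr}}) : partition Pf setT ->
  #|[set Q | decomposition Q & refines Pf Q]| = #|parts Pf|.
Proof.
move=> dP.
pose g := fun C : {set 'I_nr} => [set B in Pf | B \subset C].
have tP := partition_trivIset dP; have cP := cover_partition dP.
have A1 Pi X : partition Pi Pf -> X \in Pi -> g (cover X) = X.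
  move=> pPi XPi; have sXP := partitionS pPi XPi.
  apply/setP => B; rewrite inE; apply/andP/idP.
    case=> BP sB; have /set0Pn[i iB] := partition_neq0 dP BP.
    have /bigcupP[B' B'X iB'] := subsetP sB i iB.
    have B'P : B' \in Pf by apply: (subsetP sXP).
    by rewrite -(def_pblock tP BP iB) (def_pblock tP B'P iB').
  by move=> BX; split; [apply: (subsetP sXP) | apply: bigcup_sup].
have A2 Q C : decomposition Q -> refines Pf Q -> C \in Q -> cover (g C) = C.
  move=> dQ /forall_inP rQ CQ; have tQ := partition_trivIset dQ.
  apply/setP => i; apply/bigcupP/idP.
    by case=> B; rewrite inE => /andP[_ sB] iB; apply: (subsetP sB).
  move=> iC; have iP : i \in cover Pf by rewrite cP inE.
  exists (pblock Pf i); last by rewrite mem_pblock.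
  rewrite inE pblock_mem //=.
  have /exists_inP[C' C'Q sC'] := rQ _ (pblock_mem iP).
  have iC' : i \in C' by apply: (subsetP sC'); rewrite mem_pblock.
  by rewrite -(def_pblock tQ CQ iC) (def_pblock tQ C'Q iC').
have hh Pi : partition Pi Pf -> g @: (cover @: Pi) = Pi.
  move=> pPi; rewrite -imset_comp (eq_in_imset (g := id)) ?imset_id //.
  by move=> X XPi; exact: (A1 Pi X pPi XPi).
have inj : {in parts Pf &, injective (fun Pi : {set {set {set 'I_nr}}} => cover @: Pi)}.
  move=> P1 P2; rewrite !inE => p1 p2 e.
  by rewrite -(hh _ p1) e hh.
rewrite -(card_in_imset inj); apply: eq_card => Q; rewrite inE; apply/andP/imsetP.
  case=> dQ rQ; have tQ := partition_trivIset dQ; exists (g @: Q); last first.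
    rewrite -imset_comp (eq_in_imset (g := id)) ?imset_id //.
    by move=> C CQ; exact: (A2 Q C dQ rQ CQ).
  rewrite inE; apply/and3P; split.
  - rewrite eqEsubset; apply/andP; split; apply/subsetP => B.
      by move=> /bigcupP[_ /imsetP[C _ ->]]; rewrite inE => /andP[].
    move=> BP; have /exists_inP[C CQ sC] := (forall_inP rQ) _ BP.
    by apply/bigcupP; exists (g C); [apply: imset_f | rewrite inE BP].
  - apply/trivIsetP => _ _ /imsetP[C1 C1Q ->] /imsetP[C2 C2Q ->] ne.
    rewrite -setI_eq0; apply: contraR ne => /set0Pn[B].
    rewrite !inE => /andP[/andP[BP s1] /andP[_ s2]].
    have /set0Pn[i iB] := partition_neq0 dP BP.
    have i1 := subsetP s1 i iB; have i2 := subsetP s2 i iB.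
    by rewrite -(def_pblock tQ C1Q i1) (def_pblock tQ C2Q i2).
  - apply/negP; case/imsetP => C CQ e.
    have := A2 Q C dQ rQ CQ; rewrite -e /cover big_set0 => C0.
    by have := partition_neq0 dQ CQ; rewrite -C0 eqxx.
case=> Pi; rewrite inE => pPi ->; split.
  by case: (partition_partition dP pPi).
apply/forall_inP => B BP; rewrite -(cover_partition pPi) in BP.
have /bigcupP[X XPi BX] := BP.
by apply/exists_inP; exists (cover X); [apply: imset_f | apply: bigcup_sup].
Qed.
Local Open Scope ring_scope.

Lemma connect_inv (T : finType) (r : rel T) (f : T -> nat) x y :
  (forall a b, r a b -> f a = f b) -> connect r x y -> f x = f y.
Proof.
move=> H /connectP[p]; elim: p x => [|z p IH] x /=; first by move=> _ ->.
by move=> /andP[rxz pz] ey; rewrite (H _ _ rxz) (IH _ pz ey).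
Qed.

Lemma connect_invT (T : finType) (U : Type) (r : rel T) (f : T -> U) x y :
  (forall a b, r a b -> f a = f b) -> connect r x y -> f x = f y.
Proof.
move=> H /connectP[p]; elim: p x => [|z p IH] x /=; first by move=> _ ->.
by move=> /andP[rxz pz] ey; rewrite (H _ _ rxz) (IH _ pz ey).
Qed.

Lemma connect_isolated (T : finType) (r : rel T) x y :
  (forall z, r x z -> z = x) -> connect r x y -> y = x.
Proof.
move=> H /connectP[p]; elim: p => [|z p IH] /=; first by move=> _ ->.
by move=> /andP[/H e pz] ey; apply: IH; rewrite -e.
Qed.

Lemma sum_delta (F : fieldType) n (f : 'I_n -> F) t :
  \sum_(j < n) f j * (j == t)%:R = f t.
Proof.
rewrite (bigD1 t) //= eqxx mulr1 big1 ?addr0 // => j /negbTE ->.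
by rewrite mulr0.
Qed.

Section Graph.
Variables (F : fieldType) (nc nr : nat) (rxn : 'I_nr -> 'I_nc * 'I_nc).

Definition wv (i : 'I_nr) : 'rV[F]_nc :=
  \row_j ((j == (rxn i).2)%:R - (j == (rxn i).1)%:R).

Definition IM (A : {set 'I_nr}) : 'M[F]_(nr, nc) :=
  \matrix_(i < nr) (if i \in A then wv i else 0).

Lemma IME (A : {set 'I_nr}) i j : IM A i j = if i \in A then (j == (rxn i).2)%:R - (j == (rxn i).1)%:R else 0.
Proof. by rewrite mxE; case: ifP => _; rewrite ?mxE. Qed.

Lemma sum_inc (A : {set 'I_nr}) (f : 'I_nc -> F) i :
  \sum_j f j * IM A i j = if i \in A then f (rxn i).2 - f (rxn i).1 else 0.
Proof.
under eq_bigr do rewrite IME.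
case: ifP => _; last by rewrite big1 // => j _; rewrite mulr0.
under eq_bigr do rewrite mulrBr.
by rewrite sumrB !sum_delta.
Qed.

Lemma sum_inc' (A : {set 'I_nr}) (f : 'I_nc -> F) i :
  \sum_j f j * (if i \in A then wv i else 0) 0 j = if i \in A then f (rxn i).2 - f (rxn i).1 else 0.
Proof. by rewrite -sum_inc; apply: eq_bigr => j _; rewrite [IM A i j]mxE. Qed.

Variable A : {set 'I_nr}.
Let e := link_rel rxn A.
Let ee := connect e.

Lemma e_sym : symmetric e.
Proof.
move=> x y; rewrite /e /link_rel; apply/exists_inP/exists_inP => -[i iA H];
  by exists i => //; rewrite orbC.
Qed.

Lemma ee_sym : symmetric ee.
Proof. exact: sym_connect_sym e_sym. Qed.

Lemma csym : connect_sym ee.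
Proof. exact: sym_connect_sym ee_sym. Qed.

Lemma edge_ee i : i \in A -> ee (rxn i).1 (rxn i).2.
Proof.
move=> iA; apply: connect1; apply/exists_inP; exists i => //.
by rewrite -surjective_pairing eqxx.
Qed.

Lemma kernel_const (u : 'rV[F]_nc) : u *m (IM A)^T = 0 ->
  forall x y, connect ee x y -> u 0 x = u 0 y.
Proof.
move=> H x y; apply: connect_invT => a b; apply: connect_invT => c d.
move=> /exists_inP[i iA /orP[] /eqP E].
  move/matrixP: H => /(_ 0 i); rewrite !mxE.
  under eq_bigr do rewrite mxE; rewrite sum_inc iA E /= => /eqP.
  by rewrite subr_eq0 => /eqP.
move/matrixP: H => /(_ 0 i); rewrite !mxE.
under eq_bigr do rewrite mxE; rewrite sum_inc iA E /= => /eqP.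
by rewrite subr_eq0 => /eqP.
Qed.


Definition Rt := [set x | roots ee x].
Definition Kmx : 'M[F]_(#|Rt|, nc) := \matrix_(k, j) (fingraph.root ee j == enum_val k)%:R.

Lemma root_in x : fingraph.root ee x \in Rt.
Proof. by rewrite inE; apply: (roots_root csym). Qed.

Lemma K_ker : (Kmx <= kermx (IM A)^T)%MS.
Proof.
apply/row_subP => k; apply/sub_kermxP; apply/rowP => i; rewrite !mxE.
under eq_bigr do rewrite !mxE.
rewrite sum_inc'; case: ifP => // iA.
have -> : fingraph.root ee (rxn i).2 = fingraph.root ee (rxn i).1.
  by apply/(fingraph.rootP csym); rewrite csym; exact: connect1 (edge_ee iA).
by rewrite subrr.
Qed.

Lemma ker_K : (kermx (IM A)^T <= Kmx)%MS.
Proof.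
apply/row_subP => r.
have : row r (kermx (IM A)^T) *m (IM A)^T = 0 by apply/sub_kermxP; rewrite row_sub.
move: (row r (kermx (IM A)^T)) => u Hu.
have cu := kernel_const Hu.
pose c : 'rV[F]_#|Rt| := \row_k u 0 (enum_val k).
suff -> : u = c *m Kmx by apply: submxMl.
apply/rowP => j; rewrite !mxE.
pose k0 := enum_rank_in (root_in j) (fingraph.root ee j).
rewrite (bigD1 k0) //= !mxE enum_rankK_in ?root_in // eqxx mulr1 big1 ?addr0.
  by apply: cu; apply: connect_root.
move=> k nk; rewrite !mxE (_ : (_ == _) = false) ?mulr0 //.
apply/negbTE; apply: contra nk => /eqP E; apply/eqP; apply: enum_val_inj.
by rewrite enum_rankK_in ?root_in // E.
Qed.

Lemma rank_K : \rank Kmx = #|Rt|.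
Proof.
pose S : 'M[F]_(nc, #|Rt|) := \matrix_(j, k) (j == enum_val k)%:R.
have KS : Kmx *m S = 1%:M.
  apply/matrixP => k k'; rewrite !mxE.
  under eq_bigr do rewrite !mxE.
  rewrite sum_delta.
  have := enum_valP k'; rewrite inE => /eqP ->.
  by rewrite (inj_eq enum_val_inj) eq_sym.
apply/eqP; rewrite eqn_leq rank_leq_row /=.
by rewrite -{1}(mxrank1 F #|Rt|) -KS mxrankM_maxl.
Qed.

Lemma Rt_card : #|Rt| = (n_lc rxn A + (nc - n_cx rxn A))%N.
Proof.
set C := complexes_of rxn A.
have e1 : #|Rt :&: C| = n_lc rxn A.
  by apply: eq_card => x; rewrite !inE.
have e2 : Rt :\: C = ~: C.
  apply/setP => x; rewrite in_setD in_setC [x \in Rt]inE; case xC: (x \in C) => //=.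
  apply/eqP; apply: (connect_isolated _ (connect_root ee x)).
  move=> z; apply: connect_isolated => y; rewrite /e /link_rel /= => /exists_inP[i iA H].
  move/negbT: xC; rewrite /C /complexes_of inE; case/negP; apply/exists_inP; exists i => //.
  by case/orP: H => /eqP ->; rewrite eqxx ?orbT.
have := cardsID C Rt; rewrite e1 e2 => <-.
have := cardsC C; rewrite card_ord => cC.
rewrite /n_cx -/C; lia.
Qed.

Lemma rank_IM : \rank (IM A) = (n_cx rxn A - n_lc rxn A)%N.
Proof.
have r1 : \rank (kermx (IM A)^T) = #|Rt|.
  by rewrite -rank_K; apply: eqmx_rank; rewrite ker_K K_ker.
rewrite mxrank_ker mxrank_tr Rt_card in r1.
have l1 := rank_leq_col (IM A).
have l2 : (n_cx rxn A <= nc)%N by rewrite /n_cx -[X in (_ <= X)%N]card_ord max_card.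
move: r1 l1 l2; set a := \rank _; set b := n_cx _ _; set c := n_lc _ _.
have l3 : (c <= b)%N.
  rewrite /c /b /n_lc /n_cx; apply: leq_trans (subset_leq_card (subsetIr Rt (complexes_of rxn A))).
  by rewrite (@eq_leq _ #|Rt :&: complexes_of rxn A|) // ; apply: eq_card => x; rewrite !inE.
move: l3; clear; lia.
Qed.
End Graph.

Lemma ind_good (R : realFieldType) (ns nc nr : nat)
  (comp : 'I_nc -> 'rV[R]_ns) (rxn : 'I_nr -> 'I_nc * 'I_nc) (P : {set {set 'I_nr}}) :
  decomposition P ->
  independent comp rxn P = good (fun i => comp (rxn i).2 - comp (rxn i).1) P.
Proof.
move=> dP; rewrite /independent mxdirectE /=.
set v := fun i : 'I_nr => comp (rxn i).2 - comp (rxn i).1.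
have E B : stoich_space comp rxn B = <<Mx v B>>%MS by [].
have S1 : (\sum_(B in P) stoich_space comp rxn B = \sum_(B in P) <<Mx v B>>)%MS.
  by apply: eq_bigr.
have S2 : (\sum_(B in P) \rank (stoich_space comp rxn B))%N = (\sum_(B in P) rk v B)%N.
  by apply: eq_bigr => B _; rewrite E mxrank_gen.
rewrite !E S1 S2.
have h : (<<Mx v setT>> == \sum_(B in P) <<Mx v B>>)%MS.
  apply/andP; split; first by rewrite genmxE; apply: Mx_cover; rewrite (cover_partition dP).
  by apply/sumsmx_subP => B _; rewrite !genmxE Mx_sub ?subsetT.
by rewrite h /= -(eqmx_rank h) mxrank_gen /good eq_sym.
Qed.

Lemma inc_good (R : realFieldType) (nc nr : nat) (rxn : 'I_nr -> 'I_nc * 'I_nc)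
  (P : {set {set 'I_nr}}) :
  incidence_independent rxn P = good (@wv R nc nr rxn) P.
Proof.
have E A : rk (@wv R nc nr rxn) A = (n_cx rxn A - n_lc rxn A)%N by exact: rank_IM.
rewrite /incidence_independent /good E eq_sym; apply/eqP/eqP => <-;
  by apply: eq_bigr => B _; rewrite E.
Qed.

Lemma finest_ext nr (p1 p2 : {set {set 'I_nr}} -> bool) P :
  (forall Q, decomposition Q -> p1 Q = p2 Q) -> finest p1 P -> finest p2 P.
Proof.
move=> H [dP pP mP]; split => //; first by rewrite -H.
by move=> Q dQ; rewrite -H //; apply: mP.
Qed.

Lemma count_gen (F : fieldType) nr m (v : 'I_nr -> 'rV[F]_m) (p : {set {set 'I_nr}} -> bool) Pf :
  (forall Q, decomposition Q -> p Q = good v Q) -> finest p Pf ->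
  num_decomps p = bell #|Pf|.
Proof.
move=> H fP; have fG := finest_ext H fP; case: (fP) => dP _ _.
rewrite /num_decomps -card_parts -(card_coarse dP); apply: eq_card => Q; rewrite !inE.
case dQ: (decomposition Q) => //=; rewrite H //; exact: good_iff.
Qed.

Theorem mainTheorem3 (R : realFieldType) (ns nc nr : nat)
  (comp : 'I_nc -> 'rV[R]_ns) (rxn : 'I_nr -> 'I_nc * 'I_nc)
  (Pind Pinc : {set {set 'I_nr}}) :
  is_crn comp rxn ->
  finest (independent comp rxn) Pind ->
  finest (incidence_independent rxn) Pinc ->
  (2 <= #|Pind|)%N -> (2 <= #|Pinc|)%N ->
  num_decomps (independent comp rxn) = bell #|Pind| /\
  num_decomps (incidence_independent rxn) = bell #|Pinc|.
Proof.
move=> _ fI fC _ _; split.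
  by apply: (count_gen (v := fun i => comp (rxn i).2 - comp (rxn i).1)) fI => Q dQ; apply: ind_good.
by apply: (count_gen (v := @wv R nc nr rxn)) fC => Q _; apply: inc_good.
Qed.
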